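(* Let $m\ge1$, $M=2^m$, $N\ge1$, and let bit probabilities $P_{C_0}(0),\ldots,P_{C_{m-1}}(0)\in(0,1)$ be given, with $P_{C_k}(1)=1-P_{C_k}(0)$. Let $\mathbb{X}$ have rows $\boldsymbol{x}_0,\ldots,\boldsymbol{x}_{M-1}\in\mathbb{R}^N$, let $\mathbb{S}=\mathring{\mathbb{X}}$ be its transform (rows $\boldsymbol{s}_i=\sum_{j}\boldsymbol{x}_j\gamma_{i,j}\sqrt{P_j}$), and let $\tilde{\mathbb{X}}$ and $\tilde{\mathbb{S}}$ be the Hadamard transforms of $\mathbb{X}$ and $\mathbb{S}$. Then $$\tilde{\boldsymbol{s}}_i=\psi_i\sum_{j=0}^{M-1}\tilde{\boldsymbol{x}}_j\prod_{\substack{k=0\\ n_{j,k}\ne n_{i,k}}}^{m-1}\big(P_{C_k}(0)-P_{C_k}(n_{j,k})\big),\qquad i=0,\ldots,M-1,$$ $$\tilde{\boldsymbol{x}}_j=\sum_{i=0}^{M-1}\frac{\tilde{\boldsymbol{s}}_i}{\psi_i}\prod_{\substack{k=0\\ n_{i,k}\ne n_{j,k}}}^{m-1}\big(P_{C_k}(n_{i,k})-P_{C_k}(0)\big),\qquad j=0,\ldots,M-1,$$ where $\psi_i=\prod_{k:\,n_{i,k}=1}2\sqrt{P_{C_k}(0)P_{C_k}(1)}$ and a product over the empty set equals $1$.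
   Context: For an integer $0\le i\le M-1$, $n_{i,k}\in\{0,1\}$ denotes the $k$-th bit of its base-2 representation ($i=\sum_k n_{i,k}2^k$); $\bar b=1-b$ for a bit $b$. Symbol probabilities: $P_i=\prod_{k=0}^{m-1}P_{C_k}(n_{i,k})$. Coefficients: $\gamma_{i,j}=\prod_{k=0}^{m-1}\big[(-1)^{\bar n_{i,k}n_{j,k}}\sqrt{P_{C_k}(0)}+(-1)^{n_{i,k}\bar n_{j,k}}\sqrt{P_{C_k}(1)}\big]$. Hadamard coefficients: $h_{i,j}=\prod_{k=0}^{m-1}(-1)^{n_{i,k}n_{j,k}}$. The Hadamard transform of a matrix with rows $\boldsymbol{x}_0,\ldots,\boldsymbol{x}_{M-1}$ is the matrix with rows $\tilde{\boldsymbol{x}}_i=\frac1M\sum_{j=0}^{M-1}\boldsymbol{x}_jh_{i,j}$. *)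

(* Defs.v *)
(* Real scalars: an arbitrary real closed field R (has Num.sqrt);
   the real numbers are an instance. *)
From HB Require Import structures.
From mathcomp Require Import all_boot all_order all_algebra.
Set Implicit Arguments. Unset Strict Implicit. Unset Printing Implicit Defensive.
Import Order.TTheory GRing.Theory Num.Theory.
Local Open Scope ring_scope.

Definition bit (i k : nat) : bool := odd (i %/ 2 ^ k).

Section Defs.
Variables (R : rcfType) (m : nat) (p0 : 'I_m -> R).

Definition Pc (k : 'I_m) (b : bool) : R := if b then 1 - p0 k else p0 k.

Definition Psym (i : 'I_(2 ^ m)) : R := \prod_(k < m) Pc k (bit i k).

Definition gam (i j : 'I_(2 ^ m)) : R :=
  \prod_(k < m)
    ((-1) ^+ (~~ bit i k && bit j k) * Num.sqrt (Pc k false)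
     + (-1) ^+ (bit i k && ~~ bit j k) * Num.sqrt (Pc k true)).

Definition had (i j : 'I_(2 ^ m)) : R := \prod_(k < m) (-1) ^+ (bit i k && bit j k).

Definition hadT (N : nat) (X : 'M[R]_(2 ^ m, N)) : 'M[R]_(2 ^ m, N) :=
  \matrix_(i, c) ((2 ^ m)%:R^-1 * \sum_(j < 2 ^ m) X j c * had i j).

Definition ringT (N : nat) (X : 'M[R]_(2 ^ m, N)) : 'M[R]_(2 ^ m, N) :=
  \matrix_(i, c) \sum_(j < 2 ^ m) X j c * gam i j * Num.sqrt (Psym j).

Definition psi (i : 'I_(2 ^ m)) : R :=
  \prod_(k < m | bit i k) (2 * Num.sqrt (Pc k false * Pc k true)).

End Defs.

(* Main.v *)
Require Import Defs.
From HB Require Import structures.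
From mathcomp Require Import all_boot all_order all_algebra.
From mathcomp Require Import ring lra.
Import Order.TTheory GRing.Theory Num.Theory.
Local Open Scope ring_scope.


Lemma bit_inj m (j j' : nat) : (j < 2 ^ m)%N -> (j' < 2 ^ m)%N ->
  (forall k, (k < m)%N -> bit j k = bit j' k) -> j = j'.
Proof.
elim: m j j' => [|m IH] j j'.
  by rewrite expn0 !ltnS !leqn0 => /eqP-> /eqP->.
move=> hj hj' hb.
have h0 : odd j = odd j' by have := hb 0%N isT; rewrite /bit expn0 !divn1.
have hh : j./2 = j'./2.
  apply: IH.
  - by rewrite -divn2 ltn_divLR // -expnSr.
  - by rewrite -divn2 ltn_divLR // -expnSr.
  move=> k hk; have := hb k.+1 hk; rewrite /bit expnS -!divn2 !divnMA.
  by rewrite !divn2.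
by rewrite -(odd_double_half j) -(odd_double_half j') h0 hh.
Qed.

Section S.
Variables (R : rcfType) (m : nat).

Definition bitsf (j : 'I_(2 ^ m)) : {ffun 'I_m -> bool} := [ffun k : 'I_m => bit j k].

Lemma bitsf_bij : bijective bitsf.
Proof.
apply: inj_card_bij.
  move=> j j' /ffunP h; apply: val_inj => /=.
  apply: (@bit_inj m _ _ (ltn_ord j) (ltn_ord j')).
  by move=> k hk; have := h (Ordinal hk); rewrite !ffunE.
by rewrite card_ffun card_bool card_ord card_ord.
Qed.

Lemma sum_bits (F : 'I_m -> bool -> R) :
  \sum_(j < 2 ^ m) \prod_(k < m) F k (bit j k) = \prod_(k < m) (F k true + F k false).
Proof.
rewrite (eq_bigr (fun k => \sum_(b : bool) F k b)); last by move=> k _; rewrite big_bool.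
rewrite bigA_distr_bigA (reindex bitsf); last by apply: onW_bij; exact: bitsf_bij.
by apply: eq_bigr => j _; apply: eq_bigr => k _; rewrite ffunE.
Qed.

Lemma prod_eq_delta (j l : 'I_(2 ^ m)) :
  \prod_(k < m) ((bit j k == bit l k)%:R : R) = (j == l)%:R.
Proof.
case: eqP => [->|ne]; first by apply: big1 => k _; rewrite eqxx.
have [k hk] : exists k : 'I_m, bit j k != bit l k.
  apply/existsP; apply: contraT; rewrite negb_exists => /forallP h; case: ne.
  apply: val_inj => /=; apply: (@bit_inj m _ _ (ltn_ord j) (ltn_ord l)) => k hk.
  by have := h (Ordinal hk); rewrite negbK => /eqP.
by rewrite (bigD1 k) //= (negbTE hk) mul0r.
Qed.
End S.


Section K.
Variables (R : rcfType) (m : nat) (p0 : 'I_m -> R).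
Hypothesis hp : forall k, 0 < p0 k < 1.

Lemma K2 (j l : 'I_(2 ^ m)) :
  \sum_(i < 2 ^ m) ((\prod_(k < m | bit i k != bit j k) (Pc p0 k (bit i k) - Pc p0 k false)) *
     (\prod_(k < m | bit l k != bit i k) (Pc p0 k false - Pc p0 k (bit l k)))) = (j == l)%:R.
Proof.
rewrite -prod_eq_delta.
under eq_bigr => i _ do rewrite [X in X * _]big_mkcond [X in _ * X]big_mkcond -big_split.
rewrite (@sum_bits _ _ (fun k b => (if b != bit j k then Pc p0 k b - Pc p0 k false else 1) *
   (if bit l k != b then Pc p0 k false - Pc p0 k (bit l k) else 1))).
apply: eq_bigr => k _; case: (bit j k); case: (bit l k); rewrite /Pc /=; ring.
Qed.

Lemma Pc_ge0 k b : 0 <= Pc p0 k b.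
Proof. by have /andP[h1 h2] := hp k; rewrite /Pc; case: b; lra. Qed.

Lemma sqrt_prod (I : finType) (F : I -> R) : (forall i, 0 <= F i) ->
  Num.sqrt (\prod_i F i) = \prod_i Num.sqrt (F i).
Proof.
move=> h; rewrite -[RHS]ger0_norm; last by apply: prodr_ge0 => i _; exact: sqrtr_ge0.
by rewrite -sqrtr_sqr -prodrXl; congr Num.sqrt; apply: eq_bigr => i _; rewrite sqr_sqrtr.
Qed.

Lemma K1 (i l : 'I_(2 ^ m)) :
  Num.sqrt (Psym p0 l) * \sum_(a < 2 ^ m) had R i a * gam p0 a l =
  psi p0 i * \sum_(a < 2 ^ m)
     (\prod_(k < m | bit a k != bit i k) (Pc p0 k false - Pc p0 k (bit a k))) * had R a l.
Proof.
rewrite /Psym sqrt_prod; last by move=> k; exact: Pc_ge0.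
rewrite /psi (big_mkcond (fun k : 'I_m => bit i k)) !big_distrr /had /gam.
under eq_bigr => a _ do rewrite -big_split /= -big_split /=.
under [RHS]eq_bigr => a _ do rewrite (big_mkcond (fun k : 'I_m => bit a k != bit i k)) /= -big_split /= -big_split /=.
rewrite (@sum_bits _ _ (fun k b => Num.sqrt (Pc p0 k (bit l k)) *
  ((-1) ^+ (bit i k && b) *
     ((-1) ^+ (~~ b && bit l k) * Num.sqrt (Pc p0 k false) +
      (-1) ^+ (b && ~~ bit l k) * Num.sqrt (Pc p0 k true))))).
rewrite (@sum_bits _ _ (fun k b => (if bit i k then 2 * Num.sqrt (Pc p0 k false * Pc p0 k true) else 1) *
  ((if b != bit i k then Pc p0 k false - Pc p0 k b else 1) * (-1) ^+ (b && bit l k)))).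
apply: eq_bigr => k _.
have /andP[h1 h2] := hp k.
rewrite /Pc /= sqrtrM; last lra.
have hs : Num.sqrt (p0 k) ^+ 2 = p0 k by rewrite sqr_sqrtr //; lra.
have ht : Num.sqrt (1 - p0 k) ^+ 2 = 1 - p0 k by rewrite sqr_sqrtr //; lra.
case: (bit i k); case: (bit l k); rewrite /=;
move: hs ht; set s := Num.sqrt (p0 k); set t := Num.sqrt (1 - p0 k);
clearbody s t => hs ht; rewrite -hs in ht *; nra.
Qed.
End K.


Theorem theorem2 (R : rcfType) (m N : nat) (p0 : 'I_m -> R)
  (hm : (0 < m)%N) (hN : (0 < N)%N)
  (hp : forall k, 0 < p0 k < 1) (X : 'M[R]_(2 ^ m, N)) :
  let S := ringT p0 X in
  (forall i : 'I_(2 ^ m),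
     row i (hadT S) =
       psi p0 i *: \sum_(j < 2 ^ m)
         (\prod_(k < m | bit j k != bit i k) (Pc p0 k false - Pc p0 k (bit j k)))
           *: row j (hadT X)) /\
  (forall j : 'I_(2 ^ m),
     row j (hadT X) =
       \sum_(i < 2 ^ m)
         ((psi p0 i)^-1 *
          \prod_(k < m | bit i k != bit j k) (Pc p0 k (bit i k) - Pc p0 k false))
           *: row i (hadT S)).
Proof.
move=> S.
set cc := fun i j : 'I_(2 ^ m) =>
  \prod_(k < m | bit j k != bit i k) (Pc p0 k false - Pc p0 k (bit j k)).
have E1 : forall i c, hadT S i c = psi p0 i * \sum_(j < 2 ^ m) cc i j * hadT X j c.
  move=> i c; rewrite !mxE.
  under eq_bigr => a _ do rewrite !mxE big_distrl.
  under [in RHS]eq_bigr => j _ do rewrite !mxE.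
  rewrite exchange_big /=.
  transitivity ((2 ^ m)%:R^-1 * \sum_(l < 2 ^ m) X l c *
     (Num.sqrt (Psym p0 l) * \sum_(a < 2 ^ m) had R i a * gam p0 a l)).
    apply: f_equal; apply: eq_bigr => l _; rewrite !big_distrr /=; apply: eq_bigr => a _ /=.
    ring.
  rewrite (eq_bigr (fun l => X l c * (psi p0 i * \sum_(a < 2 ^ m) cc i a * had R a l))); last first.
    by move=> l _; rewrite (K1 _ _ _ hp).
  rewrite big_distrr [RHS]big_distrr /=.
  under eq_bigr => l _ do rewrite !big_distrr /=.
  under [RHS]eq_bigr => a _ do rewrite !big_distrr /=.
  rewrite [RHS]exchange_big /=; apply: eq_bigr => l _; apply: eq_bigr => a _; ring.
have P1 : forall i : 'I_(2 ^ m),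
     row i (hadT S) = psi p0 i *: \sum_(j < 2 ^ m) cc i j *: row j (hadT X).
  move=> i; apply/rowP => c; rewrite [LHS]mxE E1 mxE summxE; congr (_ * _).
  by apply: eq_bigr => j _; rewrite [RHS]mxE [in RHS]mxE.
split; first exact: P1.
move=> j; apply/rowP => c; rewrite summxE.
under eq_bigr => i _ do rewrite 2!mxE E1.
rewrite mxE.
have hpsi : forall i, psi p0 i != 0.
  move=> i; apply: lt0r_neq0; apply: prodr_gt0 => k _.
  have /andP[h1 h2] := hp k.
  rewrite mulr_gt0 // sqrtr_gt0 /Pc mulr_gt0 //; lra.
set d := fun i : 'I_(2 ^ m) =>
  \prod_(k < m | bit i k != bit j k) (Pc p0 k (bit i k) - Pc p0 k false).
transitivity (\sum_(i < 2 ^ m) \sum_(l < 2 ^ m) d i * cc i l * hadT X l c); last first.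
  apply: eq_bigr => i _.
  have hi := hpsi i.
  rewrite mulrACA mulVf // mul1r.
  rewrite big_distrr /=; apply: eq_bigr => l _; rewrite /d; ring.
rewrite exchange_big /=.
rewrite (eq_bigr (fun l => (j == l)%:R * hadT X l c)); last first.
  by move=> l _; rewrite -big_distrl /= (K2 _ _ _ j l).
rewrite (bigD1 j) //= eqxx mul1r big1 ?addr0 // => l hl.
by rewrite eq_sym (negbTE hl) mul0r.
Qed.
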